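(* Let $(y_i)_{i\in\mathbb{Z}}$ be independent indeterminates. Define rational functions $y_i^{(j)}$ for $i\in\mathbb{Z}$, $j\ge -1$ by $y_i^{(-1)}=y_i^{(0)}=y_i$ and, for $j\ge1$, $$y_i^{(j)}=\frac{y_{i-1}^{(j-1)}\,y_{i+1}^{(j-1)}+1}{y_i^{(j-2)}}.$$ Then for all $i\in\mathbb{Z}$ and $j\ge1$, $$y_i^{(j)}=\frac{P(\tilde T_{i-j+1}\cup\tilde T_{i-j+2}\cup\dots\cup\tilde T_{i+j-1})}{y_{i-j+1}y_{i-j+2}\cdots y_{i+j-1}},$$ where $\tilde T_{i-j+1}\cup\dots\cup\tilde T_{i+j-1}$ denotes the ladder graph of the $2j-1$ tiles $\tilde T_{i-j+1},\dots,\tilde T_{i+j-1}$ in this order.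
   Context: For $k\in\mathbb{Z}$, the tile $\tilde T_k$ is a square whose northern edge has weight $y_{k+1}$, southern edge weight $y_{k-1}$, and eastern and western edges weight $1$. The ladder graph of a tile sequence $S_1,\dots,S_m$ (tile $S_k$ with north weight $a_k$, south weight $b_k$) is the graph obtained by gluing the squares in a row (east edge of $S_k$ identified with west edge of $S_{k+1}$): vertices $u_0,\dots,u_m,v_0,\dots,v_m$, edges $u_{k-1}u_k$ of weight $a_k$, $v_{k-1}v_k$ of weight $b_k$ ($1\le k\le m$), and $u_kv_k$ of weight $1$ ($0\le k\le m$). For a weighted graph $G$, $P(G)=\sum_M\prod_{e\in M}w_e$, summed over all perfect matchings $M$ of $G$. *)

(* Defs.v *)
From HB Require Import structures.
From mathcomp Require Import all_boot all_order all_algebra.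
From mathcomp Require Import mpoly.
Set Implicit Arguments. Unset Strict Implicit. Unset Printing Implicit Defensive.
Import Order.TTheory GRing.Theory Num.Theory.
Local Open Scope ring_scope.

(* Thus y_i generate a copy of the rational function field
   Q(y_i : i in Z) (or F_p(...)), i.e. the y_i are independent indeterminates. *)
Definition alg_indep (F : fieldType) (y : int -> F) : Prop :=
  forall (n : nat) (idx : 'I_n -> int), injective idx ->
  forall p : {mpoly int[n]}, p != 0 ->
    mmap (fun z : int => z%:~R) (fun k => y (idx k)) p != 0.

(* Ypair y n = (y^(n-1), y^(n)), with y^(-1) = y^(0) = y and
   y^(j) = (y^(j-1)_{i-1} y^(j-1)_{i+1} + 1) / y^(j-2)_i. *)
Fixpoint Ypair (F : fieldType) (y : int -> F) (n : nat) : (int -> F) * (int -> F) :=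
  match n with
  | 0%N => (y, y)
  | n'.+1 => let (a, b) := Ypair y n' in
             (b, fun i => (b (i - 1) * b (i + 1) + 1) / a i)
  end.

Definition ycl (F : fieldType) (y : int -> F) (j : nat) (i : int) : F :=
  (Ypair y j).2 i.

(* Ladder graph of m tiles S_1..S_m (indexed here by k : 'I_m, i.e. S_{k+1}),
   north weights a, south weights b.
   Vertices: (true, k) = u_k, (false, k) = v_k, k = 0..m. *)
Definition lvert (m : nat) := (bool * 'I_m.+1)%type.
Definition ledge (m : nat) := ('I_m + 'I_m + 'I_m.+1)%type.

Definition lends (m : nat) (e : ledge m) : lvert m * lvert m :=
  match e with
  | inl (inl k) => ((true, inord k), (true, inord k.+1))
  | inl (inr k) => ((false, inord k), (false, inord k.+1))
  | inr k => ((true, k), (false, k))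
  end.

Definition lweight (R : ringType) (m : nat) (a b : 'I_m -> R) (e : ledge m) : R :=
  match e with
  | inl (inl k) => a k
  | inl (inr k) => b k
  | inr _ => 1
  end.

Definition covers (m : nat) (e : ledge m) (x : lvert m) : bool :=
  (x == (lends e).1) || (x == (lends e).2).

Definition perfect_matching (m : nat) (M : {set ledge m}) : bool :=
  [forall x : lvert m, #|[set e in M | covers e x]| == 1%N].

Definition Pladder (R : comRingType) (m : nat) (a b : 'I_m -> R) : R :=
  \sum_(M : {set ledge m} | perfect_matching M) \prod_(e in M) lweight a b e.

(* Ladder graph of tiles T~_s, T~_{s+1}, ..., T~_{s+m-1}; tile T~_t has north
   weight y_{t+1}, south weight y_{t-1}. *)
Definition Ptiles (R : comRingType) (y : int -> R) (s : int) (m : nat) : R :=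
  Pladder (fun k : 'I_m => y (s + (k : nat)%:Z + 1))
          (fun k : 'I_m => y (s + (k : nat)%:Z - 1)).

(* Main.v *)
Require Import Defs.
From HB Require Import structures.
From mathcomp Require Import all_boot all_order all_algebra.
From mathcomp Require Import mpoly.
From mathcomp Require Import ring zify.
Import Order.TTheory GRing.Theory Num.Theory.
Set Implicit Arguments. Unset Strict Implicit. Unset Printing Implicit Defensive.
Local Open Scope ring_scope.
Fixpoint Kc {R : comRingType} (c : nat -> R) (n : nat) : R :=
  match n with
  | 0%N => 1
  | S p => match p with 0%N => 1 | S q => Kc c p + c q * Kc c q end
  end.

Lemma KcS (R : comRingType) (c : nat -> R) n : Kc c n.+2 = Kc c n.+1 + c n * Kc c n.
Proof. by []. Qed.

Lemma Kc_ident (R : comRingType) (c : nat -> R) (m : nat) :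
  Kc c (m + 4) * Kc (fun k => c (k + 2)%N) m - Kc c (m + 2) * Kc (fun k => c (k + 2)%N) (m + 2)
  = (-1) ^+ m * c 1%N * \prod_(k < m) c (k + 2)%N.
Proof.
set c2 := fun k => c (k + 2)%N.
have W : forall m, Kc c (m.+3) * Kc c2 m - Kc c m.+2 * Kc c2 m.+1
    = (-1) ^+ m * c 1%N * \prod_(k < m) c (k + 2)%N.
  elim=> [|n IH]; first by rewrite big_ord0 /= /c2; ring.
  idtac.
  have -> : Kc c n.+4 = Kc c n.+3 + c n.+2 * Kc c n.+2 by [].
  have -> : Kc c2 n.+2 = Kc c2 n.+1 + c (n + 2)%N * Kc c2 n by [].
  have E : c n.+2 = c (n + 2)%N by rewrite addn2.
  rewrite E.
  transitivity (- c (n+2)%N * (Kc c n.+3 * Kc c2 n - Kc c n.+2 * Kc c2 n.+1)); first by ring.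
  rewrite IH big_ord_recr exprS /=; ring.
rewrite -W !addn4 !addn2.
have -> : Kc c m.+4 = Kc c m.+3 + c m.+2 * Kc c m.+2 by [].
have -> : Kc c2 m.+2 = Kc c2 m.+1 + c (m + 2)%N * Kc c2 m by [].
rewrite addn2; ring.
Qed.

Definition noconsec (m : nat) (H : {set 'I_m}) : bool :=
  [forall h1, forall h2, (h1 \in H) ==> (h2 \in H) ==> ((h1 : nat).+1 != h2)].
Definition bnd (m : nat) (q : nat) (H : {set 'I_m}) : bool :=
  [forall h, (h \in H) ==> ((h : nat).+1 < q)%N].

Definition Gs (R : comRingType) (m : nat) (c : nat -> R) (q : nat) : R :=
  \sum_(H : {set 'I_m} | noconsec H && bnd q H) \prod_(k in H) c k.

Lemma Gs_small (R : comRingType) m (c : nat -> R) q : (q <= 1)%N -> Gs m c q = 1.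
Proof.
move=> hq; rewrite /Gs (eq_bigl (pred1 set0)) ?big_pred1_eq ?big_set0 //.
move=> H /=; apply/idP/idP.
  case/andP=> _ /forallP bH; apply/eqP/setP=> h; rewrite inE.
  by apply/negbTE/negP=> hH; move: (bH h); rewrite hH /=; lia.
move/eqP->; apply/andP; split; apply/forallP=> h; rewrite ?inE //.
by apply/forallP=> h2; rewrite inE.
Qed.

Lemma Gs_rec (R : comRingType) m (c : nat -> R) q : (q < m)%N ->
  Gs m c q.+2 = Gs m c q.+1 + c q * Gs m c q.
Proof.
move=> qm; set oq : 'I_m := Ordinal qm.
rewrite /Gs (bigID (fun H : {set 'I_m} => oq \in H)) /= addrC; congr (_ + _).
  apply: eq_bigl => H; apply/idP/idP.
    case/andP=> /andP[nH /forallP bH] oH; rewrite nH /=.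
    apply/forallP=> h; apply/implyP=> hH; move: (bH h); rewrite hH /= ltnS leq_eqVlt.
    case/orP=> // /eqP E; have : h = oq by apply/val_inj => /=; lia.
    by move=> E'; move: oH; rewrite -E' hH.
  case/andP=> nH /forallP bH; rewrite nH /=; apply/andP; split.
    by apply/forallP=> h; apply/implyP=> hH; move: (bH h); rewrite hH /=; lia.
  by apply/negP=> oH; move: (bH oq); rewrite oH /=; lia.
rewrite (reindex_onto (fun H => oq |: H) (fun H => H :\ oq)); last first.
  by move=> H /andP[_ oH]; rewrite setD1K.
rewrite big_distrr /=; apply: eq_big.
  move=> H; apply/idP/idP.
    case/andP=> /andP[/andP[nH bH] _] /eqP E.
    have oH : oq \notin H by rewrite -E !inE eqxx.
    apply/andP; split.
      apply/forallP=> h1; apply/forallP=> h2; apply/implyP=> h1H; apply/implyP=> h2H.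
      move/forallP: nH => /(_ h1) /forallP /(_ h2); by rewrite !inE h1H h2H !orbT.
    apply/forallP=> h; apply/implyP=> hH.
    move/forallP: bH => /(_ h); rewrite !inE hH orbT /=.
    move/forallP: nH => /(_ h) /forallP /(_ oq); rewrite !inE hH eqxx !orbT /= => n1.
    have hq : h != oq by apply/negP=> /eqP E1; move: oH; rewrite -E1 hH.
    move: hq; rewrite -val_eqE /= => hq; lia.
  case/andP=> nH /forallP bH.
  have oH : oq \notin H by apply/negP=> oH; move: (bH oq); rewrite oH /=; lia.
  apply/andP; split; last first.
    apply/eqP/setP=> h; rewrite !inE; case: eqP => [->|] //=; by rewrite (negbTE oH).
  rewrite !inE eqxx andbT; apply/andP; split.
    apply/forallP=> h1; apply/forallP=> h2; rewrite !inE.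
    apply/implyP=> /orP[/eqP->|h1H]; apply/implyP=> /orP[/eqP->|h2H] /=.
    - lia.
    - by move: (bH h2); rewrite h2H /=; lia.
    - by move: (bH h1); rewrite h1H /=; lia.
    - by move/forallP: nH => /(_ h1) /forallP /(_ h2); rewrite h1H h2H.
  apply/forallP=> h; rewrite !inE; apply/implyP=> /orP[/eqP->|hH] /=; first lia.
  by move: (bH h); rewrite hH /=; lia.
move=> H /andP[_ /eqP E].
have oH : oq \notin H by rewrite -E !inE eqxx.
by rewrite big_setU1.
Qed.

Lemma Gs_Kc (R : comRingType) m (c : nat -> R) q : (q <= m.+1)%N -> Gs m c q = Kc c q.
Proof.
elim: q {-2}q (leqnn q) => [|n IH] q hq hm.
  by move: hq; rewrite leqn0 => /eqP ->; rewrite Gs_small.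
case: q hq hm => [|[|q]] hq hm; try by rewrite Gs_small.
rewrite Gs_rec; last lia.
rewrite KcS !IH //; lia.
Qed.

Lemma noconsec_sum (R : comRingType) m (c : nat -> R) :
  \sum_(H : {set 'I_m} | noconsec H) \prod_(k in H) c k = Kc c m.+1.
Proof.
rewrite -(@Gs_Kc _ m) // /Gs; apply: eq_bigl => H; rewrite /bnd.
case: (noconsec H) => //=; symmetry; apply/forallP=> h; apply/implyP=> _.
by rewrite ltnS ltn_ord.
Qed.

Definition edge (m : nat) (b : bool) (k : 'I_m) : ledge m :=
  if b then inl (inl k) else inl (inr k).

Lemma covers_edge m b (k : 'I_m) b' (k0 : 'I_m.+1) :
  covers (edge b k) (b', k0) = (b' == b) && (((k0 : nat) == k) || ((k0 : nat) == k.+1)).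
Proof.
have h1 : (k0 == inord k) = ((k0 : nat) == k).
  by rewrite -val_eqE /= inordK // ltnW // ltnS ltn_ord.
have h2 : (k0 == inord k.+1) = ((k0 : nat) == k.+1).
  by rewrite -val_eqE /= inordK // ltnS ltn_ord.
by case: b; rewrite /covers /= !xpair_eqE h1 h2; case: b'.
Qed.

Lemma covers_rung m (k : 'I_m.+1) b' (k0 : 'I_m.+1) :
  covers (inr k : ledge m) (b', k0) = (k0 == k).
Proof. by rewrite /covers /= !xpair_eqE; case: b'; rewrite ?orbF. Qed.

Lemma pmP m (M : {set ledge m}) : perfect_matching M <->
  forall x, exists e, [/\ e \in M, covers e x & forall e', e' \in M -> covers e' x -> e' = e].
Proof.
split.
  move/forallP=> H x; move/cards1P: (H x) => [e /setP E]; exists e.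
  move: (E e); rewrite !inE eqxx => /andP[eM ce]; split => // e' e'M ce'.
  by move: (E e'); rewrite !inE e'M ce' => /esym/eqP.
move=> H; apply/forallP=> x; have [e [eM ce U]] := H x; apply/cards1P; exists e.
apply/setP=> e'; rewrite !inE; apply/idP/eqP => [/andP[? ?]|->]; [exact: U | by rewrite eM ce].
Qed.

Lemma edge_neq_rung m b (k : 'I_m) k0 : edge b k != inr k0.
Proof. by case: b. Qed.

Lemma edge_inj m b b' (k k' : 'I_m) : edge b k = edge b' k' -> b = b' /\ k = k'.
Proof. by case: b; case: b' => /= E; case: E. Qed.

Lemma pm_uniq m (M : {set ledge m}) x e1 e2 : perfect_matching M ->
  e1 \in M -> e2 \in M -> covers e1 x -> covers e2 x -> e1 = e2.
Proof.
move/pmP=> PM e1M e2M c1 c2; have [e [_ _ U]] := PM x.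
by rewrite (U _ e1M c1) (U _ e2M c2).
Qed.

Lemma pm_step m (M : {set ledge m}) b (k : 'I_m) : perfect_matching M ->
  edge b k \in M ->
  (forall k' : 'I_m, (k' : nat).+1 = k -> edge (~~ b) k' \in M -> edge b k' \in M) ->
  edge (~~ b) k \in M.
Proof.
move=> PM ekM hyp.
set k0 : 'I_m.+1 := inord k.
have k0k : (k0 : nat) = k by rewrite /k0 inordK // ltnW // ltnS ltn_ord.
have [e [eM ce _]] := (proj1 (pmP M) PM) (~~ b, k0).
have cu : covers (edge b k) (b, k0) by rewrite covers_edge eqxx k0k eqxx.
have H : forall b' k', edge b' k' \in M -> covers (edge b' k') (~~ b, k0) -> edge (~~ b) k \in M.
  move=> b' k' e'M; rewrite covers_edge k0k => /andP[/eqP Eb /orP[/eqP E|/eqP E]]; subst b'.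
    by have -> : k = k' := val_inj E.
  have ek'M := hyp k' (esym E) e'M.
  have cu' : covers (edge b k') (b, k0) by rewrite covers_edge eqxx k0k E eqxx orbT.
  have [_ E'] := edge_inj (pm_uniq PM ek'M ekM cu' cu).
  by move: E; rewrite -E'; lia.
move: e eM ce => [[k'|k']|k''] eM ce.
- exact: (H true k').
- exact: (H false k').
have cu' : covers (inr k'' : ledge m) (b, k0) by move: ce; rewrite !covers_rung.
by move: (pm_uniq PM eM ekM cu' cu) => /esym/eqP; rewrite (negbTE (edge_neq_rung _ _ _)).
Qed.

Lemma pm_sym m (M : {set ledge m}) : perfect_matching M ->
  forall b (k : 'I_m), (edge b k \in M) = (edge (~~ b) k \in M).
Proof.
move=> PM.
suff S : forall n b (k : 'I_m), (k : nat) = n -> edge b k \in M -> edge (~~ b) k \in M.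
  move=> b k; apply/idP/idP; first exact: S.
  by move/(S _ _ k erefl); rewrite negbK.
elim=> [|n IH] b k kn ekM; apply: (pm_step PM ekM) => k' E.
  by move: E; rewrite kn.
by move/(IH _ k'); rewrite negbK; apply; move: E; rewrite kn => -[].
Qed.

Definition rungok (m : nat) (H : {set 'I_m}) (k0 : 'I_m.+1) : bool :=
  [forall h, (h \in H) ==> (((h : nat) != k0) && ((h : nat).+1 != k0))].
Definition topM (m : nat) (M : {set ledge m}) : {set 'I_m} := [set k | edge true k \in M].
Definition mk (m : nat) (H : {set 'I_m}) : {set ledge m} :=
  [set e : ledge m | match e with inl (inl k) => k \in H | inl (inr k) => k \in H
                     | inr k0 => rungok H k0 end].

Lemma mk_edge m (H : {set 'I_m}) b k : (edge b k \in mk H) = (k \in H).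
Proof. by case: b; rewrite inE. Qed.
Lemma mk_rung m (H : {set 'I_m}) k0 : (inr k0 \in mk H) = rungok H k0.
Proof. by rewrite inE. Qed.

Lemma pm_rung m (M : {set ledge m}) k0 : perfect_matching M ->
  (inr k0 \in M) = rungok (topM M) k0.
Proof.
move=> PM; apply/idP/idP.
  move=> rM; apply/forallP=> h; apply/implyP; rewrite inE => hM.
  have c' : covers (inr k0 : ledge m) (true, k0) by rewrite covers_rung.
  apply/andP; split; apply/negP=> /eqP E.
    have c : covers (edge true h) (true, k0) by rewrite covers_edge eqxx E eqxx.
    by move: (pm_uniq PM hM rM c c') => /eqP; rewrite (negbTE (edge_neq_rung _ _ _)).
  have c : covers (edge true h) (true, k0) by rewrite covers_edge eqxx E eqxx orbT.
  by move: (pm_uniq PM hM rM c c') => /eqP; rewrite (negbTE (edge_neq_rung _ _ _)).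
move/forallP=> R; have [e [eM ce _]] := (proj1 (pmP M) PM) (true, k0).
move: e eM ce => [[k'|k']|k''] eM ce.
- have : k' \in topM M by rewrite inE.
  move=> kT; move: (R k'); rewrite kT /=.
  have : covers (edge true k') (true, k0) by [].
  by rewrite covers_edge /= => /orP[] /eqP ->; rewrite eqxx // andbF.
- have : covers (edge false k') (true, k0) by [].
  by rewrite covers_edge.
by move: ce; rewrite covers_rung => /eqP ->.
Qed.

Lemma mk_top m (M : {set ledge m}) : perfect_matching M -> mk (topM M) = M.
Proof.
move=> PM; apply/setP => -[[k|k]|k0]; rewrite inE.
- by rewrite inE.
- by rewrite inE (pm_sym PM true k).
by rewrite pm_rung.
Qed.

Lemma top_mk m (H : {set 'I_m}) : topM (mk H) = H.
Proof. by apply/setP=> k; rewrite !inE. Qed.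

Lemma pm_mk m (H : {set 'I_m}) : perfect_matching (mk H) = noconsec H.
Proof.
apply/idP/idP.
  move=> PM; apply/forallP=> h1; apply/forallP=> h2; apply/implyP=> h1H; apply/implyP=> h2H.
  apply/negP=> /eqP E.
  set k0 : 'I_m.+1 := inord h2.
  have k0k : (k0 : nat) = h2 by rewrite /k0 inordK // ltnW // ltnS ltn_ord.
  have c1 : covers (edge true h1) (true, k0) by rewrite covers_edge k0k -E !eqxx orbT.
  have c2 : covers (edge true h2) (true, k0) by rewrite covers_edge k0k !eqxx.
  have m1 : edge true h1 \in mk H by rewrite mk_edge.
  have m2 : edge true h2 \in mk H by rewrite mk_edge.
  have [_ E'] := edge_inj (pm_uniq PM m1 m2 c1 c2).
  by move: E; rewrite E'; lia.
move=> NC; apply/pmP => -[b k0].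
case: (pickP (fun h => (h \in H) && (((h : nat) == k0) || ((h : nat).+1 == k0)))) => [h /andP[hH ch] | none].
  exists (edge b h); split.
  - by rewrite mk_edge.
  - by rewrite covers_edge eqxx /= (eq_sym (k0 : nat) h) (eq_sym (k0 : nat) h.+1).
  have cl : forall b' k', edge b' k' \in mk H -> covers (edge b' k') (b, k0) -> edge b' k' = edge b h.
    move=> b' k'; rewrite mk_edge covers_edge => k'H /andP[/eqP Eb ck]; subst b'.
    move/forallP: NC => NC.
    move: (NC h) => /forallP /(_ k'); rewrite hH k'H /= => n1.
    move: (NC k') => /forallP /(_ h); rewrite hH k'H /= => n2.
    have -> // : k' = h.
      apply: ord_inj; clear -n1 n2 ch ck; move/eqP: n1; move/eqP: n2.
      by case/orP: ch => /eqP ch; case/orP: ck => /eqP ck; lia.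
  move=> [[k'|k']|k''] eM ce.
  - exact: (cl true k').
  - exact: (cl false k').
  move: eM ce; rewrite mk_rung covers_rung => /forallP /(_ h); rewrite hH /= => R /eqP Ek.
  by move: R ch; rewrite Ek => /andP[/negbTE -> /negbTE ->].
exists (inr k0); split.
- rewrite mk_rung; apply/forallP=> h; apply/implyP=> hH.
  by move: (none h); rewrite hH /= => /negbT; rewrite negb_or.
- by rewrite covers_rung.
have cl : forall b' k', edge b' k' \in mk H -> covers (edge b' k') (b, k0) -> edge b' k' = inr k0.
  move=> b' k'; rewrite mk_edge covers_edge => k'H /andP[_ ck].
  by move: (none k'); rewrite k'H /= (eq_sym (k' : nat) k0) (eq_sym (k'.+1) k0) ck.
move=> [[k'|k']|k''] eM ce.
- exact: (cl true k').
- exact: (cl false k').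
by move: ce; rewrite covers_rung => /eqP ->.
Qed.

Lemma weight_mk (R : comRingType) m (a b : 'I_m -> R) (H : {set 'I_m}) :
  \prod_(e in mk H) lweight a b e = \prod_(k in H) (a k * b k).
Proof.
rewrite big_mkcond big_sumType big_sumType /=.
have E1 : \prod_(k < m) (if inl (inl k) \in mk H then lweight a b (inl (inl k)) else 1)
   = \prod_(k in H) a k by rewrite [RHS]big_mkcond; apply: eq_bigr => k _; rewrite inE.
have E2 : \prod_(k < m) (if inl (inr k) \in mk H then lweight a b (inl (inr k)) else 1)
   = \prod_(k in H) b k by rewrite [RHS]big_mkcond; apply: eq_bigr => k _; rewrite inE.
have E3 : \prod_(k < m.+1) (if (inr k : ledge m) \in mk H then lweight a b (inr k) else 1) = 1.
  by apply: big1 => k _; case: ifP.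
by rewrite E1 E2 E3 mulr1 -big_split.
Qed.

Lemma Pladder_H (R : comRingType) m (a b : 'I_m -> R) :
  Pladder a b = \sum_(H : {set 'I_m} | noconsec H) \prod_(k in H) (a k * b k).
Proof.
rewrite /Pladder (reindex_onto (@mk m) (@topM m)); last by move=> M PM; exact: mk_top.
apply: eq_big => [H|H _]; first by rewrite top_mk eqxx andbT pm_mk.
exact: weight_mk.
Qed.

Definition cc (R : comRingType) (y : int -> R) (t : int) (k : nat) : R :=
  y (t + k%:Z + 1) * y (t + k%:Z - 1).

Lemma Ptiles_Kc (R : comRingType) (y : int -> R) s m : Ptiles y s m = Kc (cc y s) m.+1.
Proof. by rewrite /Ptiles Pladder_H -noconsec_sum. Qed.

Lemma Kc_pair (P : nat -> Prop) :
  P 0%N -> P 1%N -> (forall n, P n -> P n.+1 -> P n.+2) -> forall n, P n.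
Proof.
move=> P0 P1 PS n; suff : P n /\ P n.+1 by case.
by elim: n => [|n [IH1 IH2]]; split => //; apply: PS.
Qed.

Lemma Kc_morph (R S : comRingType) (f : {rmorphism R -> S}) (c : nat -> R) n :
  f (Kc c n) = Kc (fun k => f (c k)) n.
Proof.
elim/(Kc_pair): n => [||n IH1 IH2]; rewrite ?rmorph1 //.
by rewrite !KcS rmorphD rmorphM IH1 IH2.
Qed.

Lemma Kc_eq (R : comRingType) (c d : nat -> R) n :
  (forall k, (k.+2 <= n)%N -> c k = d k) -> Kc c n = Kc d n.
Proof.
elim/(Kc_pair): n => [||n IH1 IH2] // H.
rewrite !KcS H // IH1 ?IH2 // => k hk; apply: H; lia.
Qed.

Lemma Kc_zero (R : comRingType) n : Kc (fun _ => (0 : R)) n = 1.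
Proof.
elim/(Kc_pair): n => [||n IH1 IH2] //.
by rewrite KcS IH1 mul0r addr0.
Qed.

Lemma mevalXU' n (v : 'I_n -> int) i : meval v ('X_i : {mpoly int[n]}) = v i.
Proof. exact: mevalXU. Qed.

Lemma mmapXU' (F : fieldType) n (h : 'I_n -> F) i :
  mmap (fun z : int => z%:~R) h ('X_i : {mpoly int[n]}) = h i.
Proof. by rewrite mmapX mmap1U. Qed.

Lemma y_nz (F : fieldType) (y : int -> F) (hy : alg_indep y) t : y t != 0.
Proof.
have inj : injective (fun _ : 'I_1 => t) by move=> a b _; rewrite !ord1.
have pnz : ('X_ord0 : {mpoly int[1]}) != 0.
  apply/negP=> /eqP p0; have := mevalXU (fun _ : 'I_1 => (1:int)) ord0.
  by rewrite p0 raddf0.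
by have := hy 1%N _ inj _ pnz; rewrite mmapXU'.
Qed.

Lemma Kc_nz (F : fieldType) (y : int -> F) (hy : alg_indep y) s m : Kc (cc y s) m != 0.
Proof.
pose N := m.+2.
pose idx : 'I_N -> int := fun i => s - 1 + (i : nat)%:Z.
have inj : injective idx by move=> a b; rewrite /idx => E; apply: ord_inj; lia.
pose p : {mpoly int[N]} := Kc (fun k => 'X_(inord k.+2) * 'X_(inord k)) m.
have pnz : p != 0.
  apply/negP=> /eqP p0; have := congr1 (meval (fun _ : 'I_N => (0:int))) p0.
  rewrite /p Kc_morph (Kc_eq (d := fun _ => 0)); first by rewrite Kc_zero raddf0.
  by move=> k _; rewrite rmorphM /= !mevalXU' mul0r.
have := hy N idx inj p pnz.
rewrite /p Kc_morph (Kc_eq (d := cc y s)) // => k hk.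
rewrite rmorphM /= !mmapXU' /idx /cc !inordK; first (congr (y _ * y _); lia).
all: rewrite /N; lia.
Qed.

Section Main.
Variables (F : fieldType) (y : int -> F) (hy : alg_indep y).

Definition ff (j : nat) (i : int) : F :=
  Ptiles y (i - j%:Z + 1) (2 * j).-1
    / \prod_(k < (2 * j).-1) y (i - j%:Z + 1 + (k : nat)%:Z).
Definition gg (j : nat) (i : int) : F := if j is 0%N then y i else ff j i.

Lemma Ypair_S j : Ypair y j.+1 = ((Ypair y j).2,
  fun i => ((Ypair y j).2 (i - 1) * (Ypair y j).2 (i + 1) + 1) / (Ypair y j).1 i).
Proof. by rewrite /=; case: (Ypair y j). Qed.

Lemma ff_form j i t : t = i - j.+1%:Z + 1 ->
  ff j.+1 i = Kc (cc y t) (2 * j).+2 / \prod_(k < (2 * j).+1) y (t + (k : nat)%:Z).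
Proof.
move=> ht; rewrite /ff; have -> : (2 * j.+1).-1 = (2 * j).+1 by rewrite mulnS add2n.
by rewrite -ht Ptiles_Kc.
Qed.

Lemma prod_nz n (G : 'I_n -> int) : \prod_(k < n) y (G k) != 0.
Proof. by apply/prodf_neq0 => k _; apply: y_nz. Qed.

Lemma gg_nz j i : gg j i != 0.
Proof.
case: j => [|j]; first exact: y_nz.
rewrite /gg (ff_form (t := i - j.+1%:Z + 1)) //.
by apply: mulf_neq0; [exact: Kc_nz | apply: invr_neq0; exact: prod_nz].
Qed.

Lemma alg0 (A4 A2 B2 P1 P2 u v : F) :
  A4 = A2 * B2 + P1 * P2 -> P2 = v -> P1 != 0 -> u != 0 -> v != 0 ->
  (A4 / (P1 * u * v)) * u = (A2 / P1) * (B2 / P2) + 1.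
Proof. by move=> -> -> h1 h2 h3; field; rewrite h1 h2 h3. Qed.

Lemma alg1 (A4 A2 B0 B2 P1 P2 D0 u v : F) :
  A4 * B0 = A2 * B2 + P1 * P2 -> P2 = D0 * u * v ->
  P1 != 0 -> D0 != 0 -> u != 0 -> v != 0 ->
  (A4 / (P1 * u * v)) * (B0 / D0) = (A2 / P1) * (B2 / P2) + 1.
Proof.
move=> E EP h1 h2 h3 h4.
have -> : A4 / (P1 * u * v) * (B0 / D0) = (A4 * B0) / (P1 * u * v * D0).
  by field; rewrite h1 h2 h3 h4.
by rewrite E EP; field; rewrite h1 h2 h3 h4.
Qed.


Lemma ident_s j s :
  Kc (cc y s) (2 * j.+1).+2 * Kc (cc y (s + 2)) (2 * j)
  = Kc (cc y s) (2 * j).+2 * Kc (cc y (s + 2)) (2 * j).+2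
    + (\prod_(k < (2 * j).+1) y (s + (k : nat)%:Z)) * (\prod_(k < (2 * j).+1) y (s + 2 + (k : nat)%:Z)).
Proof.
have c2E : forall n, Kc (fun k => cc y s (k + 2)%N) n = Kc (cc y (s + 2)) n.
  by move=> n; apply: Kc_eq => k _; rewrite /cc; congr (y _ * y _); lia.
have PP : cc y s 1 * \prod_(k < 2 * j) cc y s (k + 2)%N =
   (\prod_(k < (2 * j).+1) y (s + (k : nat)%:Z)) * (\prod_(k < (2 * j).+1) y (s + 2 + (k : nat)%:Z)).
  rewrite -big_split big_ord_recl /=; congr (_ * _).
    by rewrite /cc mulrC; congr (y _ * y _); lia.
  by apply: eq_bigr => k _; rewrite /cc mulrC /bump /=; congr (y _ * y _); lia.
have := Kc_ident (cc y s) (2 * j).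
rewrite !c2E mul2n -signr_odd odd_double expr0 mul1r -mul2n PP.
rewrite (_ : (2 * j + 4)%N = (2 * j.+1).+2); last by lia.
by rewrite addn2 => <-; ring.
Qed.

Lemma D4E j s : \prod_(k < (2 * j.+1).+1) y (s + (k : nat)%:Z) =
  (\prod_(k < (2 * j).+1) y (s + (k : nat)%:Z)) * y (s + (2 * j).+1%:Z) * y (s + (2 * j).+2%:Z).
Proof. by rewrite mulnS add2n !big_ord_recr. Qed.

Lemma key j i : gg j.+2 i * gg j i = gg j.+1 (i - 1) * gg j.+1 (i + 1) + 1.
Proof.
case: j => [|j].
  pose s := i - 1.
  rewrite /gg (ff_form (j := 1) (i := i) (t := s)); last by rewrite /s; lia.
  rewrite (ff_form (j := 0) (i := i - 1) (t := s)); last by rewrite /s; lia.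
  rewrite (ff_form (j := 0) (i := i + 1) (t := s + 2)); last by rewrite /s; lia.
  rewrite D4E (_ : s + (2 * 0).+1%:Z = i); last by rewrite /s; lia.
  apply: alg0.
  - by rewrite -(ident_s 0 s) (_ : Kc (cc y (s + 2)) (2 * 0) = 1) // mulr1.
  - by rewrite (_ : (2 * 0).+1 = 1%N) // big_ord1 /= addr0.
  - exact: prod_nz.
  - exact: y_nz.
  - exact: y_nz.
pose s := i - j.+1%:Z - 1.
rewrite /gg (ff_form (j := j.+2) (i := i) (t := s)); last by rewrite /s; lia.
rewrite (ff_form (j := j.+1) (i := i - 1) (t := s)); last by rewrite /s; lia.
rewrite (ff_form (j := j.+1) (i := i + 1) (t := s + 2)); last by rewrite /s; lia.
rewrite (ff_form (j := j) (i := i) (t := s + 2)); last by rewrite /s; lia.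
rewrite D4E.
have e : (2 * j.+1 = (2 * j).+2)%N by lia.
rewrite -e.
apply: alg1.
- exact: ident_s.
- rewrite mulnS add2n !big_ord_recr /=; congr (_ * y _ * y _); lia.
- exact: prod_nz.
- exact: prod_nz.
- exact: y_nz.
- exact: y_nz.
Qed.

Lemma Ypair_S2 j i : (Ypair y j.+1).2 i =
  ((Ypair y j).2 (i - 1) * (Ypair y j).2 (i + 1) + 1) / (Ypair y j).1 i.
Proof. by rewrite Ypair_S. Qed.
Lemma Ypair_S1 j : (Ypair y j.+1).1 = (Ypair y j).2.
Proof. by rewrite Ypair_S. Qed.

Lemma Ypair_gg j i : (Ypair y j).2 i = gg j i.
Proof.
elim/Kc_pair: j i => [||j IH1 IH2] i //.
  rewrite /= /gg (ff_form (j := 0) (i := i) (t := i)); last by lia.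
  by rewrite big_ord1 /= /cc !addr0 mulr1; ring.
rewrite Ypair_S2 Ypair_S1 IH1 !IH2.
by rewrite -key mulfK // gg_nz.
Qed.

End Main.

Theorem lemma2 (F : fieldType) (y : int -> F) (hy : alg_indep y)
  (i : int) (j : nat) (hj : (0 < j)%N) :
  ycl y j i =
    Ptiles y (i - j%:Z + 1) (2 * j).-1
    / \prod_(k < (2 * j).-1) y (i - j%:Z + 1 + (k : nat)%:Z).
Proof.
case: j hj => [//|j] _.
by rewrite /ycl (Ypair_gg hy).
Qed.
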